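(* Let $n\ge 2$. Then $\max\{d_W(\sigma,\rho) : \sigma,\rho\in P^B(\emptyset;n)\} = n^2$.
   Context: $S^B_n$ is the set of bijections $\sigma$ of $\{-n,\dots,-1,1,\dots,n\}$ with $\sigma(-i)=-\sigma(i)$ for all $i$, with multiplication given by composition; a signed permutation is written in one-line notation $\sigma(1)\cdots\sigma(n)$. A signed permutation $\sigma$ has a peak at index $i\in\{2,\dots,n-1\}$ if $\sigma(i-1)<\sigma(i)>\sigma(i+1)$ (usual order on integers). $Peak(\sigma)$ is the set of indices where $\sigma$ has a peak, and for $S\subseteq[n]$, $P^B(S;n)=\{\sigma\in S^B_n : Peak(\sigma)=S\}$. The word metric is $d_W(\sigma,\rho)=\ell_B(\rho^{-1}\sigma)$, where $\ell_B(\gamma)$ is the minimum number of factors in an expression of $\gamma$ as a product of the Coxeter generators $s_0^B,\dots,s_{n-1}^B$; here $s_0^B$ swaps $1$ and $-1$ and fixes all other values, and for $1\le i<n$, $s_i^B$ swaps $i$ with $i+1$ and $-i$ with $-(i+1)$, fixing everything else. *)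

(* Defs.v *)
From mathcomp Require Import all_boot all_order all_algebra all_fingroup.
Set Implicit Arguments. Unset Strict Implicit. Unset Printing Implicit Defensive.
Import Order.TTheory GRing.Theory Num.Theory.

(* The ground set {-n,...,-1,1,...,n}: the pair (i, b) with i : 'I_n encodes
   the integer (i+1) if b = false and -(i+1) if b = true. *)
Definition ground (n : nat) : finType := ('I_n * bool)%type.

Definition intval (n : nat) (x : ground n) : int :=
  if x.2 then (- ((x.1 : nat).+1)%:Z)%R else (((x.1 : nat).+1)%:Z)%R.

Definition negg (n : nat) (x : ground n) : ground n := (x.1, ~~ x.2).

(* Bijections of the ground set (MathComp permutations). Note: MathComp's
   product is diagram order, (s * t) x = t (s x). *)
Notation bij n := {perm ground n}.

Definition compose (n : nat) (f g : bij n) : bij n := (g * f)%g.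

Definition is_signed (n : nat) (s : bij n) : bool :=
  [forall x : ground n, s (negg x) == negg (s x)].

(* one-line notation value sigma(i), for 1 <= i <= n (0 outside) *)
Definition oneline (n : nat) (s : bij n) (i : nat) : int :=
  if (0 < i <= n)%N then
    (match insub i.-1 with Some j => intval (s (j, false)) | None => 0%R end)
  else 0%R.

Definition has_peak (n : nat) (s : bij n) (i : nat) : bool :=
  [&& (2 <= i)%N, (i <= n.-1)%N,
      (oneline s i.-1 < oneline s i)%R & (oneline s i.+1 < oneline s i)%R].

(* Peak(sigma) as a subset of {0,...,n} (only indices in [n] can occur). *)
Definition Peak (n : nat) (s : bij n) : {set 'I_n.+1} :=
  [set i : 'I_n.+1 | has_peak s i].

Definition PB (n : nat) (S : {set 'I_n.+1}) : {set bij n} :=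
  [set s : bij n | is_signed s & Peak s == S].

Definition predord (n : nat) (k : 'I_n) : 'I_n :=
  Ordinal (leq_ltn_trans (leq_pred k) (ltn_ord k)).

Definition gen (n : nat) (k : 'I_n) : bij n :=
  if (k : nat) == 0%N then tperm (k, false) (k, true)
  else compose (tperm (predord k, false) (k, false))
               (tperm (predord k, true) (k, true)).

Definition word_prod (n : nat) (w : seq 'I_n) : bij n :=
  foldr (fun k g => compose (gen k) g) 1%g w.

Definition lengthB_le (n : nat) (g : bij n) (k : nat) : Prop :=
  exists w : seq 'I_n, (size w <= k)%N /\ word_prod w = g.

Definition dW_le (n : nat) (s r : bij n) (k : nat) : Prop :=
  lengthB_le (compose (r^-1)%g s) k.

(* Main.v *)
Require Import Defs.
From mathcomp Require Import all_boot all_order all_algebra all_fingroup.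
From mathcomp Require Import zify.
Set Implicit Arguments. Unset Strict Implicit. Unset Printing Implicit Defensive.
Import Order.TTheory GRing.Theory Num.Theory.

Lemma tpE (T : finType) (x y z : T) : tperm x y z = if z == x then y else if z == y then x else z.
Proof. by rewrite permE. Qed.

Lemma ord_eqE n (i j : 'I_n) : (i == j) = ((i : nat) == j).
Proof. by []. Qed.

Definition fk (k t : nat) : nat :=
  if k == 0%N then t else if t == k.-1 then k else if t == k then k.-1 else t.

Lemma gen_val n (k : 'I_n) (i : 'I_n) b :
  ((gen k (i, b)).1 : nat) = fk k i
  /\ (gen k (i, b)).2 = if ((k : nat) == 0%N) && ((i : nat) == k) then ~~ b else b.
Proof.
rewrite /gen /fk; case: eqP => k0 /=.
  rewrite tpE !xpair_eqE !ord_eqE k0.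
  by case: b; case: ((i:nat) =P 0%N) => h1 /=; rewrite ?h1; lia.
rewrite /compose permM !tpE !xpair_eqE !ord_eqE /=.
case: b => /=; rewrite ?andbT ?andbF /=.
all: case: ((i:nat) =P k.-1) => [h|h]; rewrite ?xpair_eqE ?ord_eqE /= ?andbT ?andbF /=.
all: try (case: ((i:nat) =P k) => [h'|h']); rewrite ?xpair_eqE ?ord_eqE /= ?andbT ?andbF /= .
all: try (split; lia).
all: repeat (case: ifP; rewrite ?ord_eqE /= => ?); split; lia.
Qed.

Ltac bcase c := let h := fresh in case: (boolP c) => h; rewrite ?h ?(negbTE h) /=.

Lemma ground_eqP n (x y : ground n) : x = y <-> ((x.1 : nat) = y.1 /\ x.2 = y.2).
Proof.
split=> [->//|[h1 h2]]; case: x y h1 h2 => [i b] [j c] /= h1 ->.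
by congr pair; apply: val_inj.
Qed.

Lemma signedP n (s : bij n) : is_signed s <-> forall x, s (negg x) = negg (s x).
Proof. by split=> [/forallP h x|h]; [apply/eqP/h | apply/forallP=> x; rewrite h]. Qed.

Lemma gen_signed n (k : 'I_n) : is_signed (gen k).
Proof.
apply/signedP => -[i b]; rewrite /negg /=.
case E: (gen k (i, b)) => [j c] /=.
have [h1 h2] := gen_val k i b; have [h3 h4] := gen_val k i (~~ b).
rewrite E /= in h1 h2; apply/ground_eqP; rewrite h3 h4 h1 h2 /=.
by split=> //; case: ifP.
Qed.

Lemma gen_gen n (k : 'I_n) x : gen k (gen k x) = x.
Proof.
case: x => i b; case E: (gen k (i, b)) => [j c].
have [h1 h2] := gen_val k i b; rewrite E /= in h1 h2.
have [h3 h4] := gen_val k j c; apply/ground_eqP; rewrite h3 h4 h1 h2 /=.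
clear E h3 h4; subst c; rewrite /fk in h1 *; rewrite ?h1; case: b => /=; split;
bcase ((k:nat)==0%N); bcase ((i:nat) == k.-1); bcase ((i:nat)==k); repeat (case: ifP => ? /=); lia.
Qed.

Local Open Scope ring_scope.
Definition V (a : nat) (s : bool) : int := if s then - (a.+1)%:Z else (a.+1)%:Z.
Definition cnt (i j : nat) (b : bool) (x y : int) : bool :=
  if b then (i <= j)%N && (x + y < 0) else (i < j)%N && (y < x).

Lemma arith_k (k a c i j : nat) (sa sc b : bool) : k != 0%N ->
  (if i == j then (a == c) && (sa == sc) else a != c) ->
  cnt i j b (V (fk k a) sa) (V (fk k c) sc) != cnt i j b (V a sa) (V c sc) ->
  [/\ (i < j)%N, ((a == k.-1) && (c == k)) || ((a == k) && (c == k.-1)) & b = (sa != sc)].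
Proof.
case: k => // k _; rewrite /fk /cnt /V /=.
bcase (i == j); case: sa; case: sc; case: b => /=;
bcase (a == k); bcase (a == k.+1); bcase (c == k); bcase (c == k.+1); move=> ? ?; split; lia.
Qed.

Lemma arith_0 (a c i j : nat) (sa sc b : bool) :
  (if i == j then (a == c) && (sa == sc) else a != c) ->
  cnt i j b (V a (if a == 0%N then ~~ sa else sa)) (V c (if c == 0%N then ~~ sc else sc))
    != cnt i j b (V a sa) (V c sc) ->
  [/\ i = j, a = 0%N & b = true].
Proof.
rewrite /cnt /V.
bcase (i == j); case: sa; case: sc; case: b => /=;
bcase (a == 0%N); bcase (c == 0%N); move=> ? ?; split; lia.
Qed.

Lemma compose_signed n (f g : bij n) : is_signed f -> is_signed g -> is_signed (compose f g).
Proof.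
move=> /signedP hf /signedP hg; apply/signedP => x.
by rewrite /compose !permM hg hf.
Qed.

Lemma inv_signed n (g : bij n) : is_signed g -> is_signed (g^-1)%g.
Proof.
move=> /signedP hg; apply/signedP => x.
apply: (@perm_inj _ g); rewrite hg !permKV.
by case: x.
Qed.

Lemma one_signed n : is_signed (1%g : bij n).
Proof. by apply/signedP => x; rewrite !perm1. Qed.

Lemma word_signed n (w : seq 'I_n) : is_signed (word_prod w).
Proof.
elim: w => [|k w IH] /=; first exact: one_signed.
exact: compose_signed (gen_signed k) IH.
Qed.

Lemma absinj n (g : bij n) i j : is_signed g ->
  ((g (i, false)).1 : nat) = (g (j, false)).1 -> i = j.
Proof.
move=> /signedP hg e.
case E: ((g (i, false)).2 == (g (j, false)).2).
  have : g (i, false) = g (j, false) by apply/ground_eqP; split=> //; apply/eqP.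
  by move/perm_inj => [].
have : g (i, false) = g (negg (j, false)).
  by rewrite hg; apply/ground_eqP; split=> //=; move: E; case: (g (i,false)).2; case: (g (j,false)).2.
by move/perm_inj.
Qed.

Definition vv n (g : bij n) (i : 'I_n) : int := intval (g (i, false)).

Definition Sset n (g : bij n) : {set 'I_n * 'I_n * bool} :=
  [set x : 'I_n * 'I_n * bool | cnt x.1.1 x.1.2 x.2 (vv g x.1.1) (vv g x.1.2)].

Definition ell n (g : bij n) := #|Sset g|.

Lemma vv_gen n (k : 'I_n) (g : bij n) i :
  vv (compose (gen k) g) i =
  V (fk k (g (i, false)).1) (if ((k : nat) == 0%N) && (((g (i, false)).1 : nat) == k) then ~~ (g (i, false)).2 else (g (i, false)).2).
Proof.
rewrite /vv /compose permM; case: (g (i, false)) => a s.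
by have [h1 h2] := gen_val k a s; rewrite /intval h1 h2.
Qed.

Lemma vvE n (g : bij n) i : vv g i = V (g (i, false)).1 (g (i, false)).2.
Proof. by []. Qed.

Lemma inS n (g : bij n) i j b : ((i, j, b) \in Sset g) = cnt i j b (vv g i) (vv g j).
Proof. by rewrite inE. Qed.

Lemma premise n (g : bij n) (i j : 'I_n) : is_signed g ->
  (if (i : nat) == j then ((((g (i, false)).1 : nat) == (g (j, false)).1) && ((g (i, false)).2 == (g (j, false)).2))
   else ((g (i, false)).1 : nat) != (g (j, false)).1).
Proof.
move=> sg; case: ((i:nat) =P j) => e.
  by rewrite (val_inj e) !eqxx.
apply/eqP => /(absinj sg) h; apply: e; by rewrite h.
Qed.

Lemma Dinfo_k n (k : 'I_n) (g : bij n) i j b : is_signed g -> (k : nat) != 0%N ->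
  ((i, j, b) \in Sset (compose (gen k) g)) != ((i, j, b) \in Sset g) ->
  [/\ (i < j)%N, ((((g (i, false)).1 : nat) == k.-1) && (((g (j, false)).1 : nat) == k))
       || ((((g (i, false)).1 : nat) == k) && (((g (j, false)).1 : nat) == k.-1))
     & b = ((g (i, false)).2 != (g (j, false)).2)].
Proof.
move=> sg k0; rewrite !inS !vv_gen !vvE (negbTE k0) /=.
exact: arith_k k0 (premise i j sg).
Qed.

Lemma Dinfo_0 n (k : 'I_n) (g : bij n) i j b : is_signed g -> (k : nat) = 0%N ->
  ((i, j, b) \in Sset (compose (gen k) g)) != ((i, j, b) \in Sset g) ->
  [/\ i = j, ((g (i, false)).1 : nat) = 0%N & b = true].
Proof.
move=> sg k0; rewrite !inS !vv_gen !vvE k0 /= /fk /=.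
move=> h; have [e1 e2 e3] := arith_0 (premise i j sg) h.
by split=> //; apply: val_inj.
Qed.

Lemma D_uniq n (k : 'I_n) (g : bij n) : is_signed g -> forall x y,
  (x \in Sset (compose (gen k) g)) != (x \in Sset g) ->
  (y \in Sset (compose (gen k) g)) != (y \in Sset g) -> x = y.
Proof.
move=> sg [[i j] b] [[i' j'] b'].
have H p q : ((g (p, false)).1 : nat) = (g (q, false)).1 -> p = q by exact: absinj.
case: (eqVneq (k : nat) 0%N) => k0.
  move=> /(Dinfo_0 sg k0) [-> e ->] /(Dinfo_0 sg k0) [-> e' ->].
  by rewrite (H j j'); last by rewrite e e'.
move=> /(Dinfo_k sg k0) [l1 o1 ->] /(Dinfo_k sg k0) [l2 o2 ->].
case/orP: o1 => /andP[/eqP e1 /eqP e2]; case/orP: o2 => /andP[/eqP e3 /eqP e4].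
- by rewrite (H i i'); [rewrite (H j j') // e2 e4 | rewrite e1 e3].
- have h1 := H i j' ltac:(by rewrite e1 e4).
  have h2 := H j i' ltac:(by rewrite e2 e3).
  subst; lia.
- have h1 := H i j' ltac:(by rewrite e1 e4).
  have h2 := H j i' ltac:(by rewrite e2 e3).
  subst; lia.
- by rewrite (H i i'); [rewrite (H j j') // e2 e4 | rewrite e1 e3].
Qed.

Lemma ell_le n (k : 'I_n) (g : bij n) : is_signed g ->
  (ell (compose (gen k) g) <= ell g + 1)%N.
Proof.
move=> sg; rewrite /ell.
case: (boolP [exists x, (x \in Sset (compose (gen k) g)) != (x \in Sset g)]).
  case/existsP => x0 hx0.
  have sub : Sset (compose (gen k) g) \subset x0 |: Sset g.
    apply/subsetP => y hy; rewrite in_setU1.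
    case: (boolP (y \in Sset g)) => hyS; first by rewrite orbT.
    have e := @D_uniq _ k g sg y x0 ltac:(by rewrite hy (negbTE hyS)) hx0.
    by rewrite e eqxx.
  apply: leq_trans (subset_leq_card sub) _; rewrite cardsU1; case: (x0 \notin Sset g) => /=; lia.
rewrite negb_exists => /forallP h.
have sub : Sset (compose (gen k) g) \subset Sset g.
  by apply/subsetP => y hy; move: (h y); rewrite hy negbK => /eqP <-.
by apply: leq_trans (subset_leq_card sub) _; rewrite addn1.
Qed.

Lemma ell_lt n (k : 'I_n) (g : bij n) x : is_signed g ->
  x \in Sset g -> x \notin Sset (compose (gen k) g) ->
  (ell (compose (gen k) g) < ell g)%N.
Proof.
move=> sg hx hx'; rewrite /ell; apply: proper_card; apply/properP; split; last by exists x.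
apply/subsetP => y hy; case: (boolP (y \in Sset g)) => // hyS.
have e := @D_uniq _ k g sg y x ltac:(by rewrite hy (negbTE hyS)) ltac:(by rewrite hx (negbTE hx')).
by move: hx'; rewrite -e hy.
Qed.

Definition Tset n : {set 'I_n * 'I_n * bool} :=
  [set x : 'I_n * 'I_n * bool | if x.2 then (x.1.1 <= x.1.2)%N else (x.1.1 < x.1.2)%N].

Definition hT n (p : 'I_n * 'I_n) : 'I_n * 'I_n * bool :=
  if (p.1 < p.2)%N then (p.1, p.2, false) else (p.2, p.1, true).

Lemma hT_inj n : injective (@hT n).
Proof.
move=> [a b] [c d]; rewrite /hT /=.
case: ifP => h1; case: ifP => h2 // [e1 e2]; subst => //; lia.
Qed.

Lemma card_T n : #|Tset n| = (n * n)%N.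
Proof.
have -> : Tset n = (@hT n) @: [set: 'I_n * 'I_n].
  apply/setP => -[[i j] b]; rewrite inE /=; apply/idP/imsetP.
    case: b => h.
      by exists (j, i); rewrite ?inE // /hT /=; case: ifP => //; lia.
    by exists (i, j); rewrite ?inE // /hT /= h.
  case=> -[a c] _; rewrite /hT /=; case: ifP => h [-> -> ->] //=; lia.
by rewrite card_imset ?cardsT ?card_prod ?card_ord //; exact: hT_inj.
Qed.

Lemma S_sub_T n (g : bij n) : Sset g \subset Tset n.
Proof.
apply/subsetP => -[[i j] b]; rewrite inS inE /cnt /=.
case: b => /andP [h _] //.
Qed.

Lemma ell_max n (g : bij n) : (ell g <= n * n)%N.
Proof. by rewrite -card_T; apply: subset_leq_card; exact: S_sub_T. Qed.

Lemma ell1 n : ell (1%g : bij n) = 0%N.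
Proof.
apply/eqP; rewrite cards_eq0; apply/eqP/setP => -[[i j] b].
rewrite inS in_set0 /cnt !vvE !perm1 /V /=.
case: b; lia.
Qed.

Lemma ell_word n (w : seq 'I_n) : (ell (word_prod w) <= size w)%N.
Proof.
elim: w => [|k w IH] /=; first by rewrite ell1.
apply: leq_trans (ell_le k (word_signed w)) _; lia.
Qed.

Lemma ginv_pos n (g : bij n) (m : 'I_n) : is_signed g ->
  g (((g^-1)%g (m, false)).1, false) = (m, ((g^-1)%g (m, false)).2).
Proof.
move=> /signedP sg; case E: ((g^-1)%g (m, false)) => [p s] /=.
case: s E => E.
  have -> : (p, false) = negg (p, true) by [].
  by rewrite sg -E permKV.
by rewrite -E permKV.
Qed.

Section Desc.
Variables (n : nat) (g : bij n).
Hypothesis sg : is_signed g.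
Hypothesis nod : forall (k : 'I_n) x, x \in Sset g -> x \in Sset (compose (gen k) g).

Let P (m : 'I_n) := ((g^-1)%g (m, false)).

Lemma sign0 (m : 'I_n) : (m : nat) = 0%N -> (P m).2 = false.
Proof.
move=> m0; case E: (P m).2 => //.
have h := ginv_pos m sg; rewrite -/(P m) E in h.
have := nod m (x := ((P m).1, (P m).1, true)).
rewrite !inS !vv_gen !vvE h /= m0 /fk /cnt /V /= leqnn /=.
move=> H; have := H isT; lia.
Qed.

Lemma step (m k : 'I_n) : (k : nat) = (m : nat).+1 -> (P m).2 = false ->
  (P k).2 = false /\ ((P m).1 < (P k).1)%N.
Proof.
move=> ek sm.
have hm := ginv_pos m sg; rewrite -/(P m) sm in hm.
have hk := ginv_pos k sg; rewrite -/(P k) in hk.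
have k0 : (k : nat) != 0%N by rewrite ek.
set p := (P m).1 in hm *; set q := (P k).1 in hk *.
have pq : (p : nat) != q.
  apply/eqP => /val_inj e; move: hm; rewrite e hk => -[] /(congr1 val) /=; lia.
case E: (P k).2; rewrite E in hk.
  case: (ltngtP p q) => l; last by rewrite l eqxx in pq.
    have := nod k (x := (p, q, true)).
    rewrite !inS !vv_gen !vvE hm hk /= (negbTE k0) /fk (negbTE k0) /cnt /V /= ek.
    move=> H; exfalso; move: H; rewrite ?succnK ?eqxx /=; repeat (case: ifP => ? /=); lia.
  have := nod k (x := (q, p, true)).
  rewrite !inS !vv_gen !vvE hm hk /= (negbTE k0) /fk (negbTE k0) /cnt /V /= ek.
  move=> H; exfalso; move: H; rewrite ?succnK ?eqxx /=; repeat (case: ifP => ? /=); lia.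
split=> //.
case: (ltngtP p q) => l //; last by rewrite l eqxx in pq.
have := nod k (x := (q, p, false)).
rewrite !inS !vv_gen !vvE hm hk /= (negbTE k0) /fk (negbTE k0) /cnt /V /= ek.
move=> H; exfalso; move: H; rewrite ?succnK ?eqxx /=; repeat (case: ifP => ? /=); lia.
Qed.

Lemma chain d : forall (o o' : 'I_n), (o' : nat) = (o + d)%N -> (P o).2 = false ->
  ((P o).1 + d <= (P o').1)%N /\ (P o').2 = false.
Proof.
elim: d => [|d IH] o o' e so.
  have oo : o' = o by apply: val_inj => /=; rewrite e addn0.
  by rewrite oo addn0.
have h : (o + d < n)%N by have := ltn_ord o'; lia.
have [h1 h2] := IH o (Ordinal h) erefl so.
have ek : (o' : nat) = (Ordinal h : nat).+1 by rewrite e /=; lia.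
have [h3 h4] := step ek h2.
split=> //; lia.
Qed.

Lemma ginv1 : (g^-1)%g = 1%g.
Proof.
apply/permP => -[o b]; rewrite perm1.
have hn : (0 < n)%N by have := ltn_ord o; lia.
pose o0 : 'I_n := Ordinal hn.
have hl : ((n - 1)%N < n)%N by lia.
pose ol : 'I_n := Ordinal hl.
have s0 := sign0 (m := o0) erefl.
have [c1 c2] := chain (o := o0) (o' := o) (d := o) erefl s0.
have [c3 c4] := chain (o := o) (o' := ol) (d := ((n - 1)%N - o)%N) ltac:(rewrite /=; have := ltn_ord o; lia) c2.
have c5 := ltn_ord (P ol).1.
have eq : P o = (o, false).
  apply/ground_eqP; split=> //=; move: c1 c3 c5 (ltn_ord o); rewrite /P /=; lia.
case: b; last exact: eq.
have -> : (o, true) = negg (o, false) by [].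
by have /signedP -> := inv_signed sg; rewrite -/(P o) eq.
Qed.

End Desc.

Lemma descent n (g : bij n) : is_signed g -> g != 1%g ->
  exists k : 'I_n, exists x, x \in Sset g /\ x \notin Sset (compose (gen k) g).
Proof.
move=> sg ng.
case: (boolP [exists k : 'I_n, [exists x, (x \in Sset g) && (x \notin Sset (compose (gen k) g))]]).
  by case/existsP => k /existsP [x /andP [h1 h2]]; exists k, x.
rewrite negb_exists => /forallP H.
have nod : forall (k : 'I_n) x, x \in Sset g -> x \in Sset (compose (gen k) g).
  move=> k x hx; have := H k; rewrite negb_exists => /forallP /(_ x).
  by rewrite hx /= negbK.
by move: ng; rewrite -(invgK g) (ginv1 sg nod) invg1 eqxx.
Qed.

Lemma compose_gen_gen n (k : 'I_n) (g : bij n) : compose (gen k) (compose (gen k) g) = g.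
Proof. by apply/permP => x; rewrite /compose !permM gen_gen. Qed.

Lemma upper_aux n N : forall g : bij n, is_signed g -> (ell g <= N)%N -> lengthB_le g (ell g).
Proof.
elim: N => [|N IH] g sg hl.
  case: (eqVneq g 1%g) => [->|ng]; first by exists [::].
  have [k [x [h1 h2]]] := descent sg ng.
  have := ell_lt sg h1 h2; lia.
case: (eqVneq g 1%g) => [->|ng]; first by exists [::].
have [k [x [h1 h2]]] := descent sg ng.
have lt := ell_lt sg h1 h2.
have sg' := compose_signed (gen_signed k) sg.
have [w [hw ew]] := IH _ sg' ltac:(lia).
exists (k :: w); split; first by rewrite /=; lia.
by rewrite /= ew compose_gen_gen.
Qed.

Lemma upper n (g : bij n) : is_signed g -> lengthB_le g (ell g).
Proof. by move=> sg; apply: (upper_aux (N := ell g)). Qed.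

Lemma negg_inv n : involutive (@negg n).
Proof. by case=> i b; rewrite /negg /= negbK. Qed.

Definition w0 n : bij n := perm (inv_inj (@negg_inv n)).

Lemma w0E n x : w0 n x = negg x.
Proof. by rewrite permE. Qed.

Lemma w0_signed n : is_signed (w0 n).
Proof. by apply/signedP => x; rewrite !w0E. Qed.

Lemma w0V n x : ((w0 n)^-1)%g x = negg x.
Proof. by apply: (@perm_inj _ (w0 n)); rewrite permKV w0E negg_inv. Qed.

Lemma ell_neg n (g : bij n) : (forall i, g (i, false) = (i, true)) -> ell g = (n * n)%N.
Proof.
move=> h; rewrite /ell -(card_T n).
have -> : Sset g = Tset n; last by [].
apply/setP => -[[i j] b]; rewrite inS inE !vvE !h /cnt /V /=.
case: b; lia.
Qed.

Lemma oneline_gen n (s : bij n) (i : nat) (f : nat -> int) :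
  (forall j : 'I_n, intval (s (j, false)) = f (j : nat).+1) ->
  (0 < i <= n)%N -> oneline s i = f i.
Proof.
move=> hf hi; rewrite /oneline hi.
case: insubP => [j _ ej | hn]; first by rewrite hf ej prednK //; case/andP: hi.
exfalso; move: hn hi; rewrite -subn1; lia.
Qed.

Lemma oneline_1 n i : (0 < i <= n)%N -> oneline (1%g : bij n) i = (i : int).
Proof. by apply: (oneline_gen (f := fun m : nat => (m : int))) => j; rewrite perm1. Qed.

Lemma oneline_w0 n i : (0 < i <= n)%N -> oneline (w0 n) i = - (i : int).
Proof. by apply: (oneline_gen (f := fun m : nat => - (m : int))) => j; rewrite w0E. Qed.

Lemma Peak1 n : Peak (1%g : bij n) = set0.
Proof.
apply/setP => i; rewrite !inE /has_peak; apply/negbTE/negP => /and4P [h1 h2 h3 h4].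
have := ltn_ord i; move: h3 h4.
rewrite !oneline_1; try (rewrite -?subn1; lia).
Qed.

Lemma Peakw0 n : Peak (w0 n) = set0.
Proof.
apply/setP => i; rewrite !inE /has_peak; apply/negbTE/negP => /and4P [h1 h2 h3 h4].
have := ltn_ord i; move: h3 h4.
rewrite !oneline_w0; try (rewrite -?subn1; lia).
Qed.

Local Close Scope ring_scope.
Theorem corollary4p2 (n : nat) (hn : (2 <= n)%N) :
  (forall s r : bij n, s \in PB set0 -> r \in PB set0 -> dW_le s r (n ^ 2)) /\
  (exists s r : bij n, [/\ s \in PB set0, r \in PB set0 & ~ dW_le s r (n ^ 2).-1]).
Proof.
split.
  move=> s r; rewrite !inE => /andP [ss _] /andP [sr _].
  have sg := compose_signed (inv_signed sr) ss.
  have [w [hw ew]] := upper sg.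
  exists w; split=> //; apply: leq_trans hw _; rewrite -mulnn; exact: ell_max.
exists 1%g, (w0 n); split.
- by rewrite inE one_signed Peak1 eqxx.
- by rewrite inE w0_signed Peakw0 eqxx.
move=> [w [hw ew]].
have := ell_word w; rewrite ew.
have -> : ell (compose ((w0 n)^-1)%g 1%g) = (n * n)%N.
  by apply: ell_neg => i; rewrite /compose mul1g w0V.
move: hw; rewrite -mulnn -subn1; lia.
Qed.
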